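(* For all $n\ge 1$, $|F_n(321,1423,4123)|=F_{n+1}-1$, where $F_n$ is the $n$-th Fibonacci number with $F_0=F_1=1$ and $F_n=F_{n-1}+F_{n-2}$ for $n\ge 2$.
   Context: A permutation $\pi$ avoids a classical pattern $p\in S_k$ if no subsequence of $\pi$ of length $k$ is order-isomorphic to $p$. A Fishburn permutation is a permutation $\pi=\pi_1\cdots\pi_n$ of $[n]$ for which there are no indices $i<j$ with $\pi_j<\pi_i<\pi_{i+1}$ and $\pi_i=\pi_j+1$. $F_n(\sigma_1,\dots,\sigma_k)$ denotes the set of Fishburn permutations of length $n$ avoiding each of the classical patterns $\sigma_1,\dots,\sigma_k$. *)

(* Defs.v *)
From mathcomp Require Import all_boot all_fingroup.
Set Implicit Arguments. Unset Strict Implicit. Unset Printing Implicit Defensive.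

(* A permutation pi of [n] is represented as s : 'S_n (a permutation of
   {0,...,n-1}); pi_i (1-based) corresponds to (s (i-1)).+1.  Only order
   comparisons and differences of values matter, so this shift is harmless. *)

(* Classical pattern containment: the pattern p is given in one-line notation
   as a sequence of naturals (e.g. [:: 3; 2; 1] for 321).  s contains p iff
   some strictly increasing choice of size p positions of s gives a
   subsequence order-isomorphic to p. *)
Definition contains_pattern (n : nat) (s : 'S_n) (p : seq nat) : bool :=
  [exists f : {ffun 'I_(size p) -> 'I_n},
     [forall i : 'I_(size p), forall j : 'I_(size p),
        ((i < j)%N ==> (f i < f j)%N) &&
        ((nth 0 p i < nth 0 p j)%N == (s (f i) < s (f j))%N)]].

Definition avoids (n : nat) (s : 'S_n) (p : seq nat) : bool :=
  ~~ contains_pattern s p.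

Definition fishburn (n : nat) (s : 'S_n) : bool :=
  ~~ [exists i : 'I_n, exists j : 'I_n, exists i1 : 'I_n,
        [&& (i < j)%N, (i1 : nat) == i.+1, (s j < s i)%N, (s i < s i1)%N
          & (s i : nat) == (s j).+1]].

Definition Fish_avoid (n : nat) (pats : seq (seq nat)) : {set 'S_n} :=
  [set s : 'S_n | fishburn s && all (avoids s) pats].

Fixpoint fib (n : nat) : nat :=
  match n with
  | 0 => 1
  | 1 => 1
  | (m.+1 as m1).+1 => fib m1 + fib m
  end.

(* Main.v *)
Require Import Defs.
From mathcomp Require Import all_boot all_fingroup.
From mathcomp Require Import zify.
Set Implicit Arguments. Unset Strict Implicit. Unset Printing Implicit Defensive.


Definition injN m (g : nat -> nat) := forall x y, x < m -> y < m -> g x = g y -> x = y.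
Definition surjN m (g : nat -> nat) := forall u, u < m -> exists2 x, x < m & g x = u.
Definition closedN m (g : nat -> nat) := forall x, x < m -> g x < m.
Definition fishN m (g : nat -> nat) := forall i j, i < j -> j < m -> i.+1 < m ->
  g j < g i -> g i < g i.+1 -> g i = (g j).+1 -> False.
Definition c321N m (g : nat -> nat) := exists a b c, [/\ a < b, b < c, c < m, g b < g a & g c < g b].
Definition c1423N m (g : nat -> nat) := exists a b c d,
  [/\ a < b, b < c, c < d, d < m & [/\ g a < g c, g c < g d & g d < g b]].
Definition c4123N m (g : nat -> nat) := exists a b c d,
  [/\ a < b, b < c, c < d, d < m & [/\ g b < g c, g c < g d & g d < g a]].
Definition PN m g := [/\ fishN m g, ~ c321N m g, ~ c1423N m g & ~ c4123N m g].
Definition isIP m (g : nat -> nat) := [/\ 3 <= m, g 0 = 2, g 1 = 0, g m.-1 = 1 &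
  forall j, 2 <= j -> j.+2 <= m -> g j = j.+1].

Lemma key k g : injN k.+1 g -> surjN k.+1 g -> closedN k.+1 g -> PN k.+1 g ->
  g k <> k -> ~ (g k.-1 = k /\ g k = k.-1) -> isIP k.+1 g.
Proof.
move=> inj surj cl [fi n321 n1423 n4123] h1 h2.
have vlt : g k < k by have := cl k (leqnn _); lia.
have [i ilt gi] := surj (g k).+1 ltac:(lia).
have ik : i < k.
  case: (ltngtP i k) => // [|ek]; first lia.
  by move: gi; rewrite ek; lia.
have i1 : i.+1 < k.
  case: (ltngtP i.+1 k) => // [|ek]; first lia.
  exfalso; have ei : i = k.-1 by lia.
  subst i.
  have [ev|nv] := eqVneq (g k).+1 k.
    by apply: h2; split; lia.
  have [p plt gp] := surj k (leqnn _).
  have pk : p <> k by move=> e; move: gp; rewrite e; lia.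
  have pi : p <> k.-1 by move=> e; move: gp; rewrite e; lia.
  apply: n321; exists p, k.-1, k; split; lia.
have wlt : g i.+1 < g k.
  have : ~~ (g i < g i.+1) by apply/negP => H; apply: (fi i k) => //; lia.
  have ne1 : g i.+1 <> g i by move=> e; have := inj (i.+1) (i) ltac:(lia) ltac:(lia) e; lia.
  have ne2 : g i.+1 <> g k by move=> e; have := inj (i.+1) (k) ltac:(lia) ltac:(lia) e; lia.
  lia.
have i0 : i = 0.
  case: (posnP i) => // ipos; exfalso.
  have x1 : g 0 <> g i by move=> e; have := inj (0) (i) ltac:(lia) ltac:(lia) e; lia.
  have x2 : g 0 <> g k by move=> e; have := inj (0) (k) ltac:(lia) ltac:(lia) e; lia.
  have x3 : g 0 <> g i.+1 by move=> e; have := inj (0) (i.+1) ltac:(lia) ltac:(lia) e; lia.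
  have x4 : ~ g i < g 0.
    move=> H; apply: n321; exists 0, i, i.+1; split; lia.
  have x5 : ~ g 0 < g i.+1.
    move=> H; apply: n1423; exists 0, i, i.+1, k; split; first [lia | split; lia].
  have y : g 0 < g 1.
    have [e1|ne] := eqVneq i 1; first by rewrite -e1; lia.
    have y1 : g 1 <> g 0 by move=> e; have := inj (1) (0) ltac:(lia) ltac:(lia) e; lia.
    have y2 : g 1 <> g i.+1 by move=> e; have := inj (1) (i.+1) ltac:(lia) ltac:(lia) e; lia.
    have y3 : ~ (g 1 < g 0 /\ g i.+1 < g 1).
      case=> ??; apply: n321; exists 0, 1, i.+1; split; lia.
    have y4 : ~ (g 1 < g i.+1).
      move=> H; apply: n1423; exists 1, i, i.+1, k; split; first [lia | split; lia].
    lia.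
  have [q qlt gq] := surj (g 0).-1 ltac:(lia).
  have q0 : q <> 0 by move=> e; move: gq; rewrite e; lia.
  apply: (fi 0 q) => //; lia.
subst i.
have w0 : g 1 = 0.
  case: (posnP (g 1)) => // wpos; exfalso.
  have [q qlt gq] := surj (g 1).-1 ltac:(lia).
  have q0 : q <> 0 by move=> e; move: gq; rewrite e; lia.
  have q1 : q <> 1 by move=> e; move: gq; rewrite e; lia.
  have qk : q <> k by move=> e; move: gq; rewrite e; lia.
  apply: n321; exists 0, 1, q; split; lia.
have v1 : g k = 1.
  case: (ltngtP (g k) 1) => // [|vgt]; first lia.
  exfalso.
  have [q qlt gq] := surj 1 ltac:(lia).
  have q0 : q <> 0 by move=> e; move: gq; rewrite e; lia.
  have q1 : q <> 1 by move=> e; move: gq; rewrite e; lia.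
  have qk : q <> k by move=> e; move: gq; rewrite e; lia.
  apply: n4123; exists 0, 1, q, k; split; first [lia | split; lia].
have mid3 : forall j, 2 <= j -> j < k -> 3 <= g j.
  move=> j j2 jk.
  have a0 : g j <> g 0 by move=> e; have := inj (j) (0) ltac:(lia) ltac:(lia) e; lia.
  have a1 : g j <> g 1 by move=> e; have := inj (j) (1) ltac:(lia) ltac:(lia) e; lia.
  have a2 : g j <> g k by move=> e; have := inj (j) (k) ltac:(lia) ltac:(lia) e; lia.
  lia.
have incr : forall a b, 2 <= a -> a < b -> b < k -> g a < g b.
  move=> a b a2 ab bk.
  have ne : g a <> g b by move=> e; have := inj (a) (b) ltac:(lia) ltac:(lia) e; lia.
  have gb3 := mid3 b ltac:(lia) bk.
  have : ~ g b < g a by move=> H; apply: n321; exists a, b, k; split; lia.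
  lia.
have lo : forall d, d.+2 < k -> d.+3 <= g d.+2.
  elim=> [|d IH] H; first by have := mid3 2 (leqnn _) H; lia.
  have := IH ltac:(lia); have := incr d.+2 d.+3 ltac:(lia) ltac:(lia) H; lia.
have hi : forall d, d + 2 < k -> g (k.-1 - d) <= k - d.
  elim=> [|d IH] H; first by rewrite !subn0; have := cl k.-1 ltac:(lia); lia.
  have := IH ltac:(lia).
  have := incr (k.-1 - d.+1) (k.-1 - d) ltac:(lia) ltac:(lia) ltac:(lia); lia.
split => //=; first lia.
move=> j j2 jk.
have := lo (j - 2) ltac:(lia); have := hi (k.-1 - j) ltac:(lia).
have -> : (j - 2).+2 = j by lia.
have -> : k.-1 - (k.-1 - j) = j by lia.
lia.
Qed.

Lemma PN_mono m m' g : m' <= m -> PN m g -> PN m' g.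
Proof.
move=> le [fi a b c]; split.
- by move=> i j ij jm i1m; apply: fi => //; lia.
- by move=> [x [y [z [? ? ? ? ?]]]]; apply: a; exists x, y, z; split=> //; lia.
- by move=> [x [y [z [w [? ? ? ? ?]]]]]; apply: b; exists x, y, z, w; split=> //; lia.
- by move=> [x [y [z [w [? ? ? ? ?]]]]]; apply: c; exists x, y, z, w; split=> //; lia.
Qed.

Lemma E1 m g : closedN m g -> g m = m -> PN m g -> PN m.+1 g.
Proof.
move=> cl gm [fi a b c]; split.
- move=> i j ij jm i1m H1 H2 H3.
  have [ejm|] := eqVneq j m.
    by subst j; have := cl i ltac:(lia); lia.
  by move=> ?; apply: (fi i j) => //; lia.
- move=> [x [y [z [? ? ? ? ?]]]]; apply: a; exists x, y, z; split=> //.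
  have [//|?] := ltnP z m; have e : z = m by lia.
  subst z; have := cl y ltac:(lia); lia.
- move=> [x [y [z [w [? ? ? ? [? ? ?]]]]]]; apply: b; exists x, y, z, w; split=> //.
  have [//|?] := ltnP w m; have e : w = m by lia.
  subst w; have := cl y ltac:(lia); lia.
- move=> [x [y [z [w [? ? ? ? [? ? ?]]]]]]; apply: c; exists x, y, z, w; split=> //.
  have [//|?] := ltnP w m; have e : w = m by lia.
  subst w; have := cl x ltac:(lia); lia.
Qed.

Lemma E2 m g : closedN m g -> g m = m.+1 -> g m.+1 = m -> PN m g -> PN m.+2 g.
Proof.
move=> cl g1 g2 [fi a b c].
have V : forall x, x < m.+2 -> (x < m /\ g x < m) \/ (x = m /\ g x = m.+1) \/ (x = m.+1 /\ g x = m).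
  move=> x xl; case: (ltngtP x m) => [xm|xm|->]; [left; split => //; exact: cl | | by right; left].
  have -> : x = m.+1 by lia. by right; right.
split.
- move=> i j ij jm i1m H1 H2 H3.
  have := V i ltac:(lia); have := V j jm; have := V i.+1 i1m.
  move=> Vi1 Vj Vi.
  have [i1m'|] := ltnP i.+1 m; last by lia.
  by apply: (fi i j) => //; lia.
- move=> [x [y [z [? ? ? ? ?]]]].
  have := V x ltac:(lia); have := V y ltac:(lia); have := V z ltac:(lia) => Vz Vy Vx.
  have [zm|] := ltnP z m; last by lia.
  by apply: a; exists x, y, z; split.
- move=> [x [y [z [w [? ? ? ? [? ? ?]]]]]].
  have := V x ltac:(lia); have := V y ltac:(lia); have := V z ltac:(lia); have := V w ltac:(lia) => Vw Vz Vy Vx.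
  have [wm|] := ltnP w m; last by lia.
  by apply: b; exists x, y, z, w; split.
- move=> [x [y [z [w [? ? ? ? [? ? ?]]]]]].
  have := V x ltac:(lia); have := V y ltac:(lia); have := V z ltac:(lia); have := V w ltac:(lia) => Vw Vz Vy Vx.
  have [wm|] := ltnP w m; last by lia.
  by apply: c; exists x, y, z, w; split.
Qed.

Lemma E3 m g : isIP m g -> PN m g.
Proof.
move=> [m3 g0 g1 gm gj].
have V : forall x, x < m -> (x = 0 /\ g x = 2) \/ (x = 1 /\ g x = 0) \/ (x = m.-1 /\ g x = 1)
   \/ (2 <= x /\ x.+2 <= m /\ g x = x.+1).
  move=> x xl; case: x xl => [|[|x]] xl; [by left; split|by right; left; split|].
  have [e|ne] := eqVneq x.+2 m.-1; first by right; right; left; rewrite e.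
  by right; right; right; split=> //; split; [lia| apply: gj; lia].
split.
- move=> i j ij jm i1m H1 H2 H3.
  have := V i ltac:(lia); have := V j jm; have := V i.+1 i1m.
  lia.
- move=> [x [y [z [? ? ? ? ?]]]].
  have := V x ltac:(lia); have := V y ltac:(lia); have := V z ltac:(lia). lia.
- move=> [x [y [z [w [? ? ? ? [? ? ?]]]]]].
  have := V x ltac:(lia); have := V y ltac:(lia); have := V z ltac:(lia); have := V w ltac:(lia). lia.
- move=> [x [y [z [w [? ? ? ? [? ? ?]]]]]].
  have := V x ltac:(lia); have := V y ltac:(lia); have := V z ltac:(lia); have := V w ltac:(lia). lia.
Qed.


Definition isIb m (g : nat -> nat) := [&& 3 <= m, g 0 == 2, g 1 == 0, g m.-1 == 1 &
  all (fun j => g j == j.+1) (iota 2 (m - 3))].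

Fixpoint goodb (m : nat) (g : nat -> nat) : bool :=
  match m with
  | 0 => true
  | 1 => true
  | (k.+1 as m1).+1 => ((g m1 == m1) && goodb m1 g) || [&& g k == m1, g m1 == k & goodb k g]
                       || isIb m1.+1 g
  end.

Lemma goodbE k g : goodb k.+2 g = ((g k.+1 == k.+1) && goodb k.+1 g)
   || [&& g k == k.+1, g k.+1 == k & goodb k g] || isIb k.+2 g.
Proof. by []. Qed.

Lemma isIPb m g : isIP m g <-> isIb m g.
Proof.
split.
- move=> [m3 g0 g1 gm gj]; apply/and5P; split; try by apply/eqP.
  by []. apply/allP => j; rewrite mem_iota => /andP[j2 jm]; apply/eqP/gj => //; lia.
- move=> /and5P[m3 /eqP g0 /eqP g1 /eqP gm /allP gj]; split => // j j2 jm.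
  by apply/eqP/gj; rewrite mem_iota; apply/andP; split => //; lia.
Qed.

Lemma prop1 m g : injN m.+1 g -> surjN m.+1 g -> closedN m.+1 g -> g m = m ->
  [/\ injN m g, surjN m g & closedN m g].
Proof.
move=> inj surj cl gm; split.
- by move=> x y xl yl; apply: inj; lia.
- move=> u ul; have [x xl gx] := surj u ltac:(lia); exists x => //.
  have [//|xm] := ltnP x m; have e : x = m by lia.
  by move: gx; rewrite e gm; lia.
- move=> x xl; have := cl x ltac:(lia).
  have : g x <> g m by move=> e; have := inj x m ltac:(lia) ltac:(lia) e; lia.
  lia.
Qed.

Lemma prop2 m g : injN m.+2 g -> surjN m.+2 g -> closedN m.+2 g -> g m = m.+1 -> g m.+1 = m ->
  [/\ injN m g, surjN m g & closedN m g].
Proof.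
move=> inj surj cl g1 g2; split.
- by move=> x y xl yl; apply: inj; lia.
- move=> u ul; have [x xl gx] := surj u ltac:(lia); exists x => //.
  have [//|xm] := ltnP x m.
  have [e|e] : x = m \/ x = m.+1 by lia.
  + by move: gx; rewrite e g1; lia.
  + by move: gx; rewrite e g2; lia.
- move=> x xl; have := cl x ltac:(lia).
  have : g x <> g m by move=> e; have := inj x m ltac:(lia) ltac:(lia) e; lia.
  have : g x <> g m.+1 by move=> e; have := inj x m.+1 ltac:(lia) ltac:(lia) e; lia.
  lia.
Qed.

Lemma PN_small m g : m <= 1 -> PN m g.
Proof.
move=> m1; split.
- by move=> i j ij jm; lia.
- by move=> [x [y [z [? ? ? ? ?]]]]; lia.
- by move=> [x [y [z [w [? ? ? ? ?]]]]]; lia.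
- by move=> [x [y [z [w [? ? ? ? ?]]]]]; lia.
Qed.

Lemma charac m g : injN m g -> surjN m g -> closedN m g -> (PN m g <-> goodb m g).
Proof.
elim: m {-2}m (leqnn m) g => [|N IH] m le g inj surj cl.
  have -> : m = 0 by lia. by split => // _; apply: PN_small.
case: m le inj surj cl => [|[|k]] le inj surj cl; try by split => // _; apply: PN_small.
rewrite goodbE.
have [gk1|gk1] := eqVneq (g k.+1) k.+1.
  have [inj' surj' cl'] := prop1 inj surj cl gk1.
  have IH1 := IH k.+1 ltac:(lia) g inj' surj' cl'.
  split.
  - move=> P; apply/orP; left; apply/orP; left; apply/andP; split => //.
    by apply/IH1; apply: (PN_mono _ P); lia.
  - move=> /orP[/orP[/andP[_ G]|/and3P[/eqP a /eqP b _]]|H].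
    + by apply: E1 => //; apply/IH1.
    + by move: gk1; rewrite b; lia.
    + by move: H => /isIPb [m3 _ _ gm _]; move: gm; rewrite /= gk1; lia.
have [gkgk|gkgk] := boolP ((g k == k.+1) && (g k.+1 == k)).
  move: (gkgk) => /andP[/eqP gk /eqP gk1'].
  have [inj' surj' cl'] := prop2 inj surj cl gk gk1'.
  have IH2 := IH k ltac:(lia) g inj' surj' cl'.
  split.
  - move=> P; apply/orP; left; apply/orP; right; rewrite gk gk1' !eqxx /=; apply/IH2.
    by apply: (PN_mono _ P); lia.
  - move=> /orP[/orP[/andP[] //|/and3P[_ _ G]]|H].
    + by apply: E2 => //; apply/IH2.
    + by apply: E3; apply/isIPb.
split.
- move=> P; apply/orP; right; apply/isIPb; apply: key => //.
  + by apply/eqP.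
  + by move=> /= [a b]; move: gkgk; rewrite a b !eqxx.
- move=> /orP[/orP[/andP[] //|/and3P[/eqP a /eqP b _]]|H].
  + by move: gkgk; rewrite a b !eqxx.
  + by apply: E3; apply/isIPb.
Qed.


Definition sn n (s : 'S_n) (k : nat) : nat :=
  match (insub k : option 'I_n) with Some i => val (s i) | None => k end.

Lemma snE n (s : 'S_n) (i : 'I_n) : sn s i = s i.
Proof. by rewrite /sn valK. Qed.

Lemma snO n (s : 'S_n) k (kn : k < n) : sn s k = s (Ordinal kn).
Proof. by rewrite -snE. Qed.

Lemma sn_perm n (s : 'S_n) : [/\ injN n (sn s), surjN n (sn s) & closedN n (sn s)].
Proof.
split.
- move=> x y xn yn; rewrite (snO s xn) (snO s yn) => /val_inj/perm_inj.
  by move=> /(congr1 val).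
- move=> u un; exists (s^-1 (Ordinal un))%g => //.
  by rewrite snE permKV.
- by move=> x xn; rewrite (snO s xn).
Qed.

Lemma fish_conv n (s : 'S_n) : fishburn s <-> fishN n (sn s).
Proof.
split.
- move=> /negP F i j ij jn i1n H1 H2 H3; apply: F.
  apply/existsP; exists (Ordinal (ltn_trans ij jn)); apply/existsP; exists (Ordinal jn).
  apply/existsP; exists (Ordinal i1n).
  rewrite -!snO /=; apply/and5P; split => //; by apply/eqP.
- move=> F; apply/negP => /existsP[i /existsP[j /existsP[i1 /and5P[ij /eqP e H1 H2 /eqP H3]]]].
  have i1n : i.+1 < n by rewrite -e ltn_ord.
  have si1 : sn s i.+1 = s i1 by rewrite -e snE.
  apply: (F i j) => //; by rewrite ?si1 !snE.
Qed.

Ltac fin := first [done | lia | (apply/implyP => ?; lia) | (apply/eqP; apply/idP/idP => ?; lia)].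
Ltac solve_pair := first [ (apply/andP; split; fin) | fin ].

Lemma get_pat n (s : 'S_n) (p : seq nat) (f : {ffun 'I_(size p) -> 'I_n}) :
  [forall i : 'I_(size p), forall j : 'I_(size p),
        ((i < j)%N ==> (f i < f j)%N) &&
        ((nth 0 p i < nth 0 p j)%N == (s (f i) < s (f j))%N)] ->
  (forall i j : 'I_(size p), i < j -> f i < f j) /\
  (forall i j : 'I_(size p), nth 0 p i < nth 0 p j -> s (f i) < s (f j)).
Proof.
move=> /forallP H; split=> i j.
- by have /andP[/implyP h _] := forallP (H i) j.
- by have /andP[_ /eqP <-] := forallP (H i) j.
Qed.

Lemma c321_conv n (s : 'S_n) : contains_pattern s [:: 3; 2; 1] <-> c321N n (sn s).
Proof.
split.
- move=> /existsP[f /get_pat [H1 H2]].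
  pose o0 : 'I_3 := @Ordinal 3 0 isT.
  pose o1 : 'I_3 := @Ordinal 3 1 isT.
  pose o2 : 'I_3 := @Ordinal 3 2 isT.
  exists (f o0), (f o1), (f o2); rewrite !snE; split.
  + exact: (H1 o0 o1).
  + exact: (H1 o1 o2).
  + exact: ltn_ord.
  + exact: (H2 o1 o0).
  + exact: (H2 o2 o1).
- move=> [a [b [c [ab bc cn h1 h2]]]].
  have bn : b < n by lia. have an : a < n by lia.
  move: h1 h2; rewrite (snO s an) (snO s bn) (snO s cn) => h1 h2.
  apply/existsP; exists [ffun i : 'I_3 => nth (Ordinal an) [:: Ordinal an; Ordinal bn; Ordinal cn] i].
  apply/forallP => i; apply/forallP => j; rewrite !ffunE.
  by case: i => [[|[|[|//]]] ?]; case: j => [[|[|[|//]]] ?] /=; solve_pair.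
Qed.

Lemma c1423_conv n (s : 'S_n) : contains_pattern s [:: 1; 4; 2; 3] <-> c1423N n (sn s).
Proof.
split.
- move=> /existsP[f /get_pat [H1 H2]].
  pose o0 : 'I_4 := @Ordinal 4 0 isT.
  pose o1 : 'I_4 := @Ordinal 4 1 isT.
  pose o2 : 'I_4 := @Ordinal 4 2 isT.
  pose o3 : 'I_4 := @Ordinal 4 3 isT.
  exists (f o0), (f o1), (f o2), (f o3); rewrite !snE; split.
  + exact: (H1 o0 o1).
  + exact: (H1 o1 o2).
  + exact: (H1 o2 o3).
  + exact: ltn_ord.
  + split; [exact: (H2 o0 o2) | exact: (H2 o2 o3) | exact: (H2 o3 o1)].
- move=> [a [b [c [d [ab bc cd dn [h1 h2 h3]]]]]].
  have cn : c < n by lia. have bn : b < n by lia. have an : a < n by lia.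
  move: h1 h2 h3; rewrite (snO s an) (snO s bn) (snO s cn) (snO s dn) => h1 h2 h3.
  apply/existsP; exists [ffun i : 'I_4 => nth (Ordinal an) [:: Ordinal an; Ordinal bn; Ordinal cn; Ordinal dn] i].
  apply/forallP => i; apply/forallP => j; rewrite !ffunE.
  by case: i => [[|[|[|[|//]]]] ?]; case: j => [[|[|[|[|//]]]] ?] /=; solve_pair.
Qed.

Lemma c4123_conv n (s : 'S_n) : contains_pattern s [:: 4; 1; 2; 3] <-> c4123N n (sn s).
Proof.
split.
- move=> /existsP[f /get_pat [H1 H2]].
  pose o0 : 'I_4 := @Ordinal 4 0 isT.
  pose o1 : 'I_4 := @Ordinal 4 1 isT.
  pose o2 : 'I_4 := @Ordinal 4 2 isT.
  pose o3 : 'I_4 := @Ordinal 4 3 isT.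
  exists (f o0), (f o1), (f o2), (f o3); rewrite !snE; split.
  + exact: (H1 o0 o1).
  + exact: (H1 o1 o2).
  + exact: (H1 o2 o3).
  + exact: ltn_ord.
  + split; [exact: (H2 o1 o2) | exact: (H2 o2 o3) | exact: (H2 o3 o0)].
- move=> [a [b [c [d [ab bc cd dn [h1 h2 h3]]]]]].
  have cn : c < n by lia. have bn : b < n by lia. have an : a < n by lia.
  move: h1 h2 h3; rewrite (snO s an) (snO s bn) (snO s cn) (snO s dn) => h1 h2 h3.
  apply/existsP; exists [ffun i : 'I_4 => nth (Ordinal an) [:: Ordinal an; Ordinal bn; Ordinal cn; Ordinal dn] i].
  apply/forallP => i; apply/forallP => j; rewrite !ffunE.
  by case: i => [[|[|[|[|//]]]] ?]; case: j => [[|[|[|[|//]]]] ?] /=; solve_pair.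
Qed.

Lemma mem_FA n (s : 'S_n) :
  (s \in Fish_avoid n [:: [:: 3; 2; 1]; [:: 1; 4; 2; 3]; [:: 4; 1; 2; 3]]) = goodb n (sn s).
Proof.
have [inj surj cl] := sn_perm s.
rewrite inE /= /avoids andbT.
apply/idP/idP.
- move=> /and4P[F A B C]; apply/(charac inj surj cl); split.
  + exact/fish_conv.
  + by move/c321_conv; apply/negP.
  + by move/c1423_conv; apply/negP.
  + by move/c4123_conv; apply/negP.
- move=> /(charac inj surj cl) [F A B C]; apply/and4P; split.
  + exact/fish_conv.
  + by apply/negP => /c321_conv.
  + by apply/negP => /c1423_conv.
  + by apply/negP => /c4123_conv.
Qed.


Lemma isIb_ext m g h : (forall x, x < m -> g x = h x) -> isIb m g = isIb m h.
Proof.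
move=> E; rewrite /isIb.
case: (leqP 3 m) => // m3.
rewrite !E; try lia.
congr [&& _, _, _, _ & _]; apply: eq_in_all => j; rewrite mem_iota => /andP[? ?].
by rewrite E //; lia.
Qed.

Lemma goodb_ext m g h : (forall x, x < m -> g x = h x) -> goodb m g = goodb m h.
Proof.
elim: m {-2}m (leqnn m) => [|N IH] m le E.
  by have -> : m = 0 by lia.
case: m le E => [|[|k]] le E //.
rewrite !goodbE (isIb_ext E) (IH k.+1) ?(IH k); try lia.
- by rewrite !E //; lia.
- by move=> x xl; apply: E; lia.
- by move=> x xl; apply: E; lia.
Qed.

Definition fixedb n (m : nat) (s : 'S_n) := [forall i : 'I_n, (m <= i) ==> (s i == i)].
Definition Cset n m : {set 'S_n} := [set s : 'S_n | goodb m (sn s) && fixedb m s].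

Lemma fixed_le1 n m (s : 'S_n) : m <= 1 -> fixedb m s -> s = 1%g.
Proof.
move=> m1 /forallP F.
have F1 : forall i : 'I_n, 1 <= i -> s i = i.
  by move=> i i1; apply/eqP; have /implyP := F i; apply; lia.
apply/permP => i; rewrite perm1.
case: (posnP i) => [i0|]; last by move=> ?; apply: F1.
case: (posnP (s i)) => [si0|si]; first by apply/val_inj => /=; rewrite si0 i0.
by have := F1 (s i) si => /perm_inj.
Qed.

Lemma Cset_le1 n m : m <= 1 -> Cset n m = [set 1%g].
Proof.
move=> m1; apply/setP => s; rewrite !inE.
have -> : goodb m (sn s) = true by case: m m1 => [|[|]].
apply/idP/eqP => [|->]; first exact: fixed_le1.
by apply/forallP => i; rewrite perm1 eqxx implybT.
Qed.

Lemma fixedS n m (s : 'S_n) (mn : m < n) : fixedb m s = (sn s m == m) && fixedb m.+1 s.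
Proof.
rewrite (snO s mn); apply/forallP/andP => [F|[/eqP e /forallP F] i].
- split; first by have /implyP := F (Ordinal mn); move=> /(_ (leqnn _)) /eqP ->.
  by apply/forallP => i; apply/implyP => h; have /implyP := F i; apply; lia.
- apply/implyP => h; have [lt|ge] := ltnP m i.
  + by have /implyP := F i; apply.
  + have -> : i = Ordinal mn by apply/val_inj => /=; lia.
    by apply/eqP/val_inj.
Qed.

Lemma card_disj (T : finType) (A B : {set T}) :
  (forall x, x \in A -> x \in B -> False) -> #|A :|: B| = #|A| + #|B|.
Proof.
move=> H; rewrite cardsU.
have -> : A :&: B = set0.
  by apply/setP => x; rewrite !inE; apply/negP => /andP[a b]; exact: H a b.
by rewrite cards0 subn0.
Qed.


Definition fI m j := if j == 0 then 2 else if j == 1 then 0 else if j == m.-1 then 1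
  else if j < m then j.+1 else j.

Lemma fI_lt m N x : 3 <= m -> m <= N -> x < N -> fI m x < N.
Proof. move=> H; rewrite /fI; repeat case: ifP; move=> *; lia. Qed.

Lemma fI_inj m x y : 3 <= m -> fI m x = fI m y -> x = y.
Proof. move=> H; rewrite /fI; repeat case: ifP; move=> *; lia. Qed.

Lemma fI_big m x : 3 <= m -> m <= x -> fI m x = x.
Proof. move=> H; rewrite /fI; repeat case: ifP; move=> *; lia. Qed.

Lemma isIP_fI m g : isIP m g -> forall j, j < m -> g j = fI m j.
Proof.
move=> [m3 g0 g1 gm gj] j jm; rewrite /fI.
case: eqP => [->//|j0]; case: eqP => [->//|j1]; case: eqP => [->//|jm1].
by rewrite jm; apply: gj; lia.
Qed.

Lemma fI_isIP m g : 3 <= m -> (forall j, j < m -> g j = fI m j) -> isIP m g.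
Proof.
move=> m3 E; split => //.
- by rewrite E; last lia.
- by rewrite E; last lia.
- rewrite E; last lia.
  rewrite /fI; case: eqP => [|_]; first lia. case: eqP => [|_]; first lia.
  by rewrite eqxx.
- move=> j j2 jm; rewrite E; last lia.
  by rewrite /fI; repeat case: ifP; move=> *; lia.
Qed.


Definition Aset n k : {set 'S_n} :=
  [set s : 'S_n | (sn s k.+1 == k.+1) && goodb k.+1 (sn s) && fixedb k.+2 s].
Definition Bset n k : {set 'S_n} :=
  [set s : 'S_n | [&& sn s k == k.+1, sn s k.+1 == k, goodb k (sn s) & fixedb k.+2 s]].
Definition Dset n k : {set 'S_n} :=
  [set s : 'S_n | isIb k.+2 (sn s) && fixedb k.+2 s].

Lemma splitC n k : Cset n k.+2 = Aset n k :|: Bset n k :|: Dset n k.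
Proof.
apply/setP => s; rewrite !inE goodbE.
by case: (sn s k.+1 == k.+1); case: goodb; case: (sn s k == k.+1); case: goodb;
   case: isIb; case: fixedb; rewrite /= ?andbF ?andbT.
Qed.

Lemma AsetE n k (kn : k.+1 < n) : Aset n k = Cset n k.+1.
Proof.
apply/setP => s; rewrite !inE (fixedS s kn).
by case: (sn s k.+1 == k.+1); case: goodb; case: fixedb.
Qed.

Lemma cardB n k (kn : k.+1 < n) : #|Bset n k| = #|Cset n k|.
Proof.
have kn' : k < n by lia.
pose xk := Ordinal kn'. pose xk1 := Ordinal kn.
pose tau := tperm xk xk1.
have tauE : forall i : 'I_n, tau i = if (i : nat) == k then xk1 else if (i : nat) == k.+1 then xk else i.
  move=> i; rewrite /tau; case: eqP => [e|ne].
    have -> : i = xk by apply/val_inj.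
    by rewrite tpermL.
  case: eqP => [e|ne1].
    have -> : i = xk1 by apply/val_inj.
    by rewrite tpermR.
  by rewrite tpermD // -(inj_eq val_inj) /=; apply/eqP; lia.
have snT : forall t : 'S_n, forall x, x < k -> sn (tau * t)%g x = sn t x.
  move=> t x xk'; have xn : x < n by lia.
  rewrite !(snO _ xn) permM tauE /=.
  by case: eqP => [|_]; [lia|case: eqP => [|_] //; lia].
have imE : Bset n k = [set (tau * t)%g | t in Cset n k].
  apply/setP => s; apply/idP/imsetP.
  - rewrite inE => /and4P[/eqP s1 /eqP s2 G /forallP F].
    exists (tau * s)%g; last by rewrite mulgA tperm2 mul1g.
    rewrite inE; apply/andP; split.
    + by rewrite (goodb_ext (h := sn s)) // => x xk'; rewrite snT.
    + apply/forallP => i; apply/implyP => ki; rewrite permM tauE.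
      move: s1 s2; rewrite (snO s kn) (snO s kn') => s1 s2.
      have [e|ne] := eqVneq (i : nat) k.
        by apply/eqP/val_inj => /=; rewrite s2 e.
      rewrite ?(negbTE ne).
      have [e1|ne1] := eqVneq (i : nat) k.+1.
        by apply/eqP/val_inj => /=; rewrite s1 e1.
      rewrite ?(negbTE ne1).
      by have /implyP := F i; apply; lia.
  - move=> [t]; rewrite inE => /andP[G /forallP F] ->.
    rewrite inE; apply/and4P; split.
    + rewrite (snO _ kn') permM tauE /= eqxx.
      by have := F xk1; rewrite /= leqnSn /= => /eqP ->.
    + rewrite (snO _ kn) permM tauE /= ifN; last by apply/eqP; lia.
      rewrite eqxx. by have := F xk; rewrite /= leqnn /= => /eqP ->.
    + by rewrite (goodb_ext (h := sn t)) // => x xk'; rewrite snT.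
    + apply/forallP => i; apply/implyP => ki; rewrite permM tauE.
      rewrite ifN; last by apply/eqP; lia.
      rewrite ifN; last by apply/eqP; lia.
      by have /implyP := F i; apply; lia.
rewrite imE card_imset //; exact: mulgI.
Qed.


Lemma cardD n k (kn : k.+1 < n) : #|Dset n k| = (0 < k).
Proof.
case: k kn => [|k] kn.
  apply/eqP; rewrite cards_eq0; apply/eqP/setP => s; rewrite !inE.
  by rewrite /isIb.
case: n kn => [//|N] kn.
pose f (i : 'I_N.+1) : 'I_N.+1 := inord (fI k.+3 i).
have fv : forall i : 'I_N.+1, val (f i) = fI k.+3 i.
  by move=> i; rewrite /= inordK //; apply: (fI_lt (N := N.+1)) => //; lia.
have finj : injective f.
  move=> i j /(congr1 val); rewrite !fv => /fI_inj e; apply/val_inj; apply: e; lia.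
pose sI := perm finj.
have snI : forall j, j < N.+1 -> sn sI j = fI k.+3 j.
  by move=> j jn; rewrite (snO _ jn) permE fv.
suff -> : Dset N.+1 k.+1 = [set sI] by rewrite cards1.
apply/setP => s; rewrite !inE; apply/idP/eqP => [/andP[I /forallP F]|->].
- apply/permP => i; apply/val_inj; rewrite permE fv.
  have [im|im] := ltnP i k.+3.
  + by rewrite /= -snE; have := isIP_fI (proj2 (isIPb _ _) I) im.
  + rewrite fI_big; [|lia|lia].
    by have := F i; rewrite im /= => /eqP ->.
- apply/andP; split.
  + apply/isIPb; apply: fI_isIP => //.
    by move=> j jm; apply: snI; lia.
  + apply/forallP => i; apply/implyP => im; apply/eqP/val_inj.
    by rewrite permE fv fI_big //; lia.
Qed.

Lemma fibSS n : fib n.+2 = fib n.+1 + fib n.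
Proof. by []. Qed.

Lemma fib_gt0 n : 0 < fib n.
Proof.
elim: n {-2}n (leqnn n) => [|N IH] n le; first by have -> : n = 0 by lia.
by case: n le => [|[|n]] le //; rewrite fibSS; have := IH n.+1 ltac:(lia); lia.
Qed.

Definition aC m := if m is 0 then 1 else (fib m.+1).-1.

Lemma countC n k : k.+1 <= n -> #|Cset n k| = aC k /\ #|Cset n k.+1| = aC k.+1.
Proof.
elim: k => [|k IH] kn.
  by rewrite !Cset_le1 // cards1.
have [IH1 IH2] := IH ltac:(lia).
split => //.
rewrite splitC card_disj; last first.
  move=> s; rewrite !inE => /orP[/andP[/andP[/eqP a _] _]|/and4P[/eqP a /eqP b _ _]] /andP[/isIPb [m3 _ g1 gm _] _].
  + by move: gm m3; rewrite /= a; lia.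
  + by move: gm; rewrite /= b => e; subst k; lia.
rewrite card_disj; last first.
  by move=> s; rewrite !inE => /andP[/andP[/eqP a _] _] /and4P[_ /eqP b _ _]; move: a; rewrite b; lia.
rewrite (AsetE kn) (cardB kn) (cardD kn) IH2 IH1.
case: k {IH IH1 IH2} kn => [|k] kn //.
rewrite /aC !fibSS.
have := fib_gt0 k; have := fib_gt0 k.+1.
rewrite [0 < k.+1]/=.
lia.
Qed.


Lemma FA_C n : Fish_avoid n [:: [:: 3; 2; 1]; [:: 1; 4; 2; 3]; [:: 4; 1; 2; 3]] = Cset n n.
Proof.
apply/setP => s; rewrite mem_FA inE.
have -> : fixedb n s by apply/forallP => i; apply/implyP; rewrite leqNgt ltn_ord.
by rewrite andbT.
Qed.

Theorem mainTheorem14 (n : nat) :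
  (1 <= n)%N ->
  #|Fish_avoid n [:: [:: 3; 2; 1]; [:: 1; 4; 2; 3]; [:: 4; 1; 2; 3]]| = (fib n.+1).-1.
Proof.
case: n => [//|n] _.
rewrite FA_C.
by have [_ ->] := countC (n := n.+1) (k := n) (leqnn _).
Qed.
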